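(* Let $M$ be a finitely presented $n$-parameter persistence module with minimal free resolution $(F_\bullet,p_\bullet)$ and fixed decomposition isomorphisms as described in the context. If $\vec r\in\xi_1(M)$ (a generator of $F_1$), then $\vec r^{\mathcal L_{\vec r}}\notin\ker p_1^{\mathcal L_{\vec r}}$, and so $\vec r$ kills a bar in $M^{\mathcal L_{\vec r}}\cong_\phi\bigoplus_{j}\mathds 1^{I_j}$.
   Context: Modules are $\mathbb{R}^n$-graded modules over $P_n$ (monoid ring over a field of $([0,\infty)^n,+)$); $\xi_1(M)$ denotes the generators (with their grades) of $F_1$ in a minimal free resolution. For $\vec a\in\mathbb{R}^n$, $\mathcal L_{\vec a}$ is the line $t\mapsto\vec a+t\vec1$. For a positively sloped line $\mathcal L$ with order-preserving $\|\cdot\|_\infty$-isometric parametrization $\iota$, $M^{\mathcal L}=M\circ\iota$, and $(F^{\mathcal L}_\bullet,p^{\mathcal L}_\bullet)$ is the induced free resolution of $M^{\mathcal L}$ (pullback along $\iota$): generator $\vec a$ of $F_i$ corresponds to $\vec a^{\mathcal L}$ of grade $\iota^{-1}(\mathrm{push}_{\mathcal L}(\mathrm{gr}\,\vec a))$, where $\mathrm{push}_{\mathcal L}(\vec p)=\min\{\vec q\in\mathcal L:\vec q\ge\vec p\}$. For each $\mathcal L$ fix an isomorphism $\phi:M^{\mathcal L}\to\bigoplus_{j}\mathds 1^{I_j}$, $I_j=[b_j,d_j)$ (possibly empty), with as many summands as generators of $F_0$. The canonical resolution $F'_\bullet$ of $\bigoplus\mathds 1^{I_j}$ has $F'_0$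 free on $\{b_j\}$, $F'_1$ free on $\{d_j:d_j\ne\infty\}$, $d_j\mapsto x^{d_j-b_j}b_j$; $\phi$ lifts to a chain map $\phi_\bullet:F^{\mathcal L}_\bullet\to F'_\bullet$. A generator $\vec r$ of $F_1$ kills the bar $I_j$ if $\mathrm{gr}(\vec r^{\mathcal L})=d_j$ and the coefficient of $d_j$ in $\phi_1(\vec r^{\mathcal L})$ is nonzero (generating a bar is defined analogously with $\phi_0$). The isomorphisms are fixed so that each bar is generated by a unique generator of $F^{\mathcal L}_0$ and killed by a unique generator of $F^{\mathcal L}_1$, and every generator of $F^{\mathcal L}_0$ generates some bar. *)

(* Defs.v *)
From HB Require Import structures.
From mathcomp Require Import all_boot all_order all_algebra.
From mathcomp Require Import reals.
Set Implicit Arguments. Unset Strict Implicit. Unset Printing Implicit Defensive.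
Import Order.TTheory GRing.Theory Num.Theory.
Local Open Scope ring_scope.

Definition leg {R : realType} {n : nat} (p q : 'I_n -> R) : Prop :=
  forall i, p i <= q i.

Definition le1 {R : realType} (x y : R) : Prop := x <= y.

(* grades of generators of the canonical F'_1: d = None means d = infinity,
   which is not a generator of F'_1 *)
Definition leopt {R : realType} (od : option R) (t : R) : Prop :=
  match od with Some x => x <= t | None => False end.

(* A free module F with generators indexed by 'I_m of grades gr : 'I_m -> T.
   Its component F(a) at grade a has basis {x^(a - gr i) * e_i | gr i <= a},
   and is represented by column vectors v : 'cV[K]_m supported there. *)
Definition supported {K : fieldType} {T U : Type} (le : T -> U -> Prop)
  {m : nat} (gr : 'I_m -> T) (a : U) (v : 'cV[K]_m) : Prop :=
  forall i, v i 0 != 0 -> le (gr i) a.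

(* elements of (maximal ideal) * F at grade a: supported on generators of
   grade strictly below a *)
Definition in_max_ideal {K : fieldType} {T : Type} (le : T -> T -> Prop)
  {m : nat} (gr : 'I_m -> T) (a : T) (v : 'cV[K]_m) : Prop :=
  forall i, v i 0 != 0 -> le (gr i) a /\ gr i <> a.

(* A graded morphism from the free module with generator grades grS (k gens)
   to the one with generator grades grT (m gens): generator j is sent to
   sum_i A i j * x^(grS j - grT i) * e_i; this requires grT i <= grS j when
   A i j != 0.  Composition of such morphisms is the matrix product and at
   each grade the morphism acts on coefficient vectors by A *m _. *)
Definition graded_mx {K : fieldType} {T U : Type} (le : T -> U -> Prop)
  {m k : nat} (grT : 'I_m -> T) (grS : 'I_k -> U) (A : 'M[K]_(m, k)) : Prop :=
  forall i j, A i j != 0 -> le (grT i) (grS j).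

(* p_1 : F_1 -> F_0 (matrix P, F_0 generator grades g, F_1 generator grades h)
   is the first map of a MINIMAL free resolution of M = coker p_1:
   im p_1 <= m F_0  (p_0 minimal)  and  ker p_1 = im p_2 <= m F_1. *)
Definition minimal_presentation {K : fieldType} {R : realType} {n m k : nat}
  (g : 'I_m -> 'I_n -> R) (h : 'I_k -> 'I_n -> R) (P : 'M[K]_(m, k)) : Prop :=
  [/\ graded_mx leg g h P,
      (forall (a : 'I_n -> R) (v : 'cV[K]_k),
          supported leg h a v -> in_max_ideal leg g a (P *m v)) &
      (forall (a : 'I_n -> R) (v : 'cV[K]_k),
          supported leg h a v -> P *m v = 0 -> in_max_ideal leg h a v)].

Definition iota_line {R : realType} {n : nat} (a : 'I_n -> R) (t : R)
  : 'I_n -> R := fun i => a i + t.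

(* t = iota^{-1}(push_L(p)),  push_L(p) = min {q in L : q >= p} *)
Definition push_param {R : realType} {n : nat} (a p : 'I_n -> R) (t : R)
  : Prop :=
  leg p (iota_line a t) /\
  (forall t', leg p (iota_line a t') -> t <= t').

(* bars I_j = [b j, d j) (d j = None means infinity), j : 'I_m *)
Definition bars_wf {R : realType} {m : nat} (b : 'I_m -> R)
  (d : 'I_m -> option R) : Prop :=
  forall j x, d j = Some x -> b j <= x.

(* p'_1 : F'_1 -> F'_0, d_j |-> x^(d_j - b_j) b_j.  F'_1 is encoded with the
   index set 'I_m, generators with d j = None being absent (vectors in F'_1
   are supported on finite d, enforced by [supported leopt d]). *)
Definition canon_p1 {K : fieldType} {R : realType} {m : nat}
  (d : 'I_m -> option R) : 'M[K]_m :=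
  \matrix_(i, j) (if (i == j) && (d j != None) then 1 else 0).

(* (Phi0, Phi1) : (F^L_0 <- F^L_1) -> (F'_0 <- F'_1) is a chain map lifting
   an ISOMORPHISM phi : M^L = coker P -> coker p'_1 = (+)_j 1^{I_j}.
   s = grades of F^L_0 generators, tL = grades of F^L_1 generators. *)
Definition lifts_iso {K : fieldType} {R : realType} {m k : nat}
  (s : 'I_m -> R) (tL : 'I_k -> R) (P : 'M[K]_(m, k))
  (b : 'I_m -> R) (d : 'I_m -> option R)
  (Phi0 : 'M[K]_m) (Phi1 : 'M[K]_(m, k)) : Prop :=
  [/\ graded_mx le1 b s Phi0,
      graded_mx leopt d tL Phi1,
      canon_p1 d *m Phi1 = Phi0 *m P,
      (* induced map injective at every grade t *)
      (forall (t : R) (v : 'cV[K]_m), supported le1 s t v ->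
         (exists w : 'cV[K]_m, supported leopt d t w /\
                               Phi0 *m v = canon_p1 d *m w) ->
         exists u : 'cV[K]_k, supported le1 tL t u /\ v = P *m u) &
      (* induced map surjective at every grade t *)
      (forall (t : R) (w : 'cV[K]_m), supported le1 b t w ->
         exists v : 'cV[K]_m, supported le1 s t v /\
         exists w' : 'cV[K]_m, supported leopt d t w' /\
                     w = Phi0 *m v + canon_p1 d *m w')].

Definition generates_bar {K : fieldType} {R : realType} {m : nat}
  (s : 'I_m -> R) (b : 'I_m -> R) (Phi0 : 'M[K]_m) (i j : 'I_m) : Prop :=
  b j = s i /\ Phi0 j i != 0.

Definition kills_bar {K : fieldType} {R : realType} {m k : nat}
  (tL : 'I_k -> R) (d : 'I_m -> option R) (Phi1 : 'M[K]_(m, k))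
  (r : 'I_k) (j : 'I_m) : Prop :=
  d j = Some (tL r) /\ Phi1 j r != 0.

Definition fixed_normalization {K : fieldType} {R : realType} {m k : nat}
  (s : 'I_m -> R) (tL : 'I_k -> R) (b : 'I_m -> R) (d : 'I_m -> option R)
  (Phi0 : 'M[K]_m) (Phi1 : 'M[K]_(m, k)) : Prop :=
  [/\ (forall j, exists! i, generates_bar s b Phi0 i j),
      (forall j x, d j = Some x -> exists! r, kills_bar tL d Phi1 r j) &
      (forall i, exists j, generates_bar s b Phi0 i j)].

(* Main.v *)
Require Import Defs.
From HB Require Import structures.
From mathcomp Require Import all_boot all_order all_algebra.
From mathcomp Require Import reals.
Import Order.TTheory GRing.Theory Num.Theory.
Local Open Scope ring_scope.

Lemma mul_delta_entry (K : fieldType) (m k : nat) (A : 'M[K]_(m, k)) (r : 'I_k) i :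
  (A *m delta_mx r (0 : 'I_1)) i 0 = A i r.
Proof. by rewrite -colE mxE. Qed.

Theorem mainTheorem16 (K : fieldType) (R : realType) (n m k : nat)
  (g : 'I_m -> 'I_n -> R) (h : 'I_k -> 'I_n -> R) (P : 'M[K]_(m, k))
  (Hmin : minimal_presentation g h P)
  (r : 'I_k)
  (s : 'I_m -> R) (tL : 'I_k -> R)
  (Hs : forall i, push_param (h r) (g i) (s i))
  (Ht : forall j, push_param (h r) (h j) (tL j))
  (b : 'I_m -> R) (d : 'I_m -> option R) (Hbd : bars_wf b d)
  (Phi0 : 'M[K]_m) (Phi1 : 'M[K]_(m, k))
  (Hphi : lifts_iso s tL P b d Phi0 Phi1)
  (Hnorm : fixed_normalization s tL b d Phi0 Phi1) :
  P *m delta_mx r (0 : 'I_1) != 0 /\ exists j, kills_bar tL d Phi1 r j.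
Proof.
case: Hmin => _ _ Hker.
case: Hphi => HPhi0 HPhi1 Hchain Hinj _.
case: Hnorm => Huniq _ Hgen.
set e : 'cV[K]_k := delta_mx r 0.
set x := P *m e.
have eE : forall i, e i 0 = (i == r)%:R.
  by move=> i; rewrite /e mxE eqxx andbT.
have taule0 : tL r <= 0.
  case: (Ht r) => _ H; apply: H => l; rewrite /iota_line addr0 //.
have xnz : x != 0.
  apply/eqP => x0.
  have supp : supported leg h (h r) e.
    move=> i; rewrite eE; case: (eqVneq i r) => [-> _ l // | _]; by rewrite eqxx.
  have := Hker (h r) e supp x0 r.
  by rewrite eE eqxx oner_eq0 => /(_ isT) [].
split; first exact: xnz.
set tau := tL r.
set w := Phi1 *m e.
have wE : forall j, w j 0 = Phi1 j r by move=> j; rewrite mul_delta_entry.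
case: (boolP [exists j, (d j == Some tau) && (Phi1 j r != 0)]).
  by case/existsP => j /andP [/eqP dj nz]; exists j; split.
move=> Hno; exfalso.
have Hno' : forall j, d j = Some tau -> Phi1 j r = 0.
  move=> j dj; apply/eqP; apply: contraNT Hno => nz.
  by apply/existsP; exists j; rewrite dj eqxx.
pose f j := match d j with Some y => if y < tau then y else tau - 1 | None => tau - 1 end.
pose t' := \big[Order.max/(tau - 1)]_j f j.
have t'lt : t' < tau.
  apply: bigmax_lt; first by rewrite ltrBlDr ltrDl ltr01.
  move=> j _; rewrite /f; case: (d j) => [y|]; last by rewrite ltrBlDr ltrDl ltr01.
  by case: ifP => // _; rewrite ltrBlDr ltrDl ltr01.
have wsupp : supported leopt d t' w.
  move=> j; rewrite wE => nz.
  have := HPhi1 j r nz; rewrite /leopt.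
  case dj: (d j) => [y|] // yle.
  have ylt : y < tau.
    rewrite lt_def yle andbT; apply/eqP => ey.
    by move: nz; rewrite Hno' ?eqxx // dj ey.
  apply: le_trans (le_bigmax (tau - 1) f j).
  by rewrite /f dj ylt.
have chainx : Phi0 *m x = canon_p1 d *m w.
  by rewrite /x /w !mulmxA Hchain.
have canonE : forall j, (canon_p1 d *m w) j 0 = if d j != None then w j 0 else 0.
  move=> j; rewrite mxE (bigD1 j) //= big1 ?addr0.
    by rewrite mxE eqxx /=; case: (d j != None); rewrite ?mul1r ?mul0r.
  by move=> i ij; rewrite mxE eq_sym (negbTE ij) /= mul0r.
have xsupp : supported le1 s t' x.
  have [i0 xi0] : exists i0, x i0 0 != 0.
    case: (pickP (fun i => x i 0 != 0)) => [i0 H|H]; first by exists i0.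
    exfalso; move/negP: xnz; apply; apply/eqP/matrixP => i j.
    rewrite (ord1 j) [RHS]mxE; apply/eqP; have := H i; rewrite /=; by case: (x i 0 == 0).
  case: (@arg_maxP _ _ _ i0 (fun i => x i 0 != 0) s xi0) => istar xs Hmax.
  suff : s istar <= t'.
    by move=> H i xi; apply: le_trans (Hmax i xi) H.
  case: (Hgen istar) => j [bj Pji].
  have yj : (Phi0 *m x) j 0 = Phi0 j istar * x istar 0.
    rewrite mxE (bigD1 istar) //= big1 ?addr0 //.
    move=> i iis; apply/eqP; rewrite mulf_eq0; apply/negPn/negP.
    rewrite negb_or => /andP [p0 xi].
    have Hle := (Hmax i xi).
    have := HPhi0 j i p0; rewrite /le1 bj => Hle2.
    have eqs : s i = s istar by apply/eqP; rewrite eq_le; apply/andP; split; [exact: Hle | exact: Hle2].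
    case: (Huniq j) => i1 [_ Hu1].
    have e1 : i1 = i by apply: Hu1; split => //; rewrite bj eqs.
    have e2 : i1 = istar by apply: Hu1; split.
    by move: iis; rewrite -e1 e2 eqxx.
  have : (Phi0 *m x) j 0 != 0 by rewrite yj mulf_neq0.
  rewrite chainx canonE.
  case dj: (d j) => [y|] /= wj; last by rewrite eqxx in wj.
  have := wsupp j wj; rewrite /leopt dj => yle.
  by rewrite -bj; apply: le_trans yle; apply: Hbd dj.
have [u [Hu xPu]] := Hinj t' x xsupp (ex_intro _ w (conj wsupp chainx)).
have ur : u r 0 = 0.
  apply/eqP; apply/negPn/negP => /Hu; rewrite /le1 -/tau => H.
  by move: (lt_le_trans t'lt H); rewrite ltxx.
have vsupp : supported leg h (h r) (e - u).
  move=> i; case: (eqVneq i r) => [-> _ l // | ir].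
  rewrite mxE eE mxE (negbTE ir) add0r oppr_eq0 => /Hu; rewrite /le1 => Hi l.
  case: (Ht i) => Hl _; apply: le_trans (Hl l) _.
  rewrite /iota_line gerDl.
  apply: le_trans taule0; apply: ltW; exact: le_lt_trans Hi t'lt.
have Pv : P *m (e - u) = 0 by rewrite mulmxBr -/x xPu subrr.
have := Hker (h r) (e - u) vsupp Pv r.
by rewrite mxE eE mxE eqxx ur subr0 oner_eq0 => /(_ isT) [].
Qed.
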